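(* Let $A=[x_0,x_1]$ and $B=[y_0,y_1]$ be closed real intervals. There is an algorithm which enumerates all solutions to the one-dimensional grid problem for $A$ and $B$, i.e., all $u\in\mathbb Z[\sqrt2]$ with $u\in A$ and $u^\bullet\in B$. Moreover, the algorithm only requires a constant number of arithmetic operations per solution produced.
   Context: $\mathbb Z[\sqrt2]=\{a+b\sqrt2 : a,b\in\mathbb Z\}\subseteq\mathbb R$, and for $u=a+b\sqrt2$ its conjugate is $u^\bullet=a-b\sqrt2$. Arithmetic operations are addition, subtraction, multiplication, division, exponentiation and logarithm. *)

(* Defs.v *)
From Stdlib Require Import Reals List ZArith.
Import ListNotations.
Open Scope R_scope.

Definition zsqrt2 (a b : Z) : R := IZR a + IZR b * sqrt 2.
Definition zsqrt2_conj (a b : Z) : R := IZR a - IZR b * sqrt 2.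

Definition grid1d_sol (x0 x1 y0 y1 : R) (a b : Z) : Prop :=
  x0 <= zsqrt2 a b <= x1 /\ y0 <= zsqrt2_conj a b <= y1.

Definition enumerates_grid1d (x0 x1 y0 y1 : R) (L : list (R * R)) : Prop :=
  NoDup L /\
  (forall p, In p L ->
     exists a b : Z, p = (IZR a, IZR b) /\ grid1d_sol x0 x1 y0 y1 a b) /\
  (forall a b : Z, grid1d_sol x0 x1 y0 y1 a b -> In (IZR a, IZR b) L).

(** * A real-RAM machine model (unit cost per executed instruction) *)

Inductive binop := OAdd | OSub | OMul | ODiv | OPow.

Definition eval_binop (o : binop) (x y : R) : R :=
  match o with
  | OAdd => x + y
  | OSub => x - y
  | OMul => x * y
  | ODiv => x / y
  | OPow => Rpower x y
  end.

Inductive instr :=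
  | IConst (d : nat) (c : Z)
  | IBin (o : binop) (d s1 s2 : nat)
  | ILn (d s : nat)
  | IFloor (d s : nat)
  | IJle (s1 s2 : nat) (l : nat)
  | IOut (s1 s2 : nat)
  | IHalt.

Record state := mkState { pc : nat; regs : nat -> R; out : list (R * R) }.

Definition upd (r : nat -> R) (d : nat) (v : R) : nat -> R :=
  fun i => if Nat.eqb i d then v else r i.

(** One step; [None] means the machine has halted (or is stuck, which we
    treat as halting). *)
Definition step (p : list instr) (s : state) : option state :=
  match nth_error p (pc s) with
  | None => None
  | Some i =>
    match i with
    | IConst d c => Some (mkState (S (pc s)) (upd (regs s) d (IZR c)) (out s))
    | IBin o d s1 s2 =>
        Some (mkState (S (pc s))
                (upd (regs s) d (eval_binop o (regs s s1) (regs s s2))) (out s))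
    | ILn d s1 => Some (mkState (S (pc s)) (upd (regs s) d (ln (regs s s1))) (out s))
    | IFloor d s1 =>
        Some (mkState (S (pc s)) (upd (regs s) d (IZR (Int_part (regs s s1)))) (out s))
    | IJle s1 s2 l =>
        if Rle_dec (regs s s1) (regs s s2)
        then Some (mkState l (regs s) (out s))
        else Some (mkState (S (pc s)) (regs s) (out s))
    | IOut s1 s2 =>
        Some (mkState (S (pc s)) (regs s) (out s ++ [(regs s s1, regs s s2)]))
    | IHalt => None
    end
  end.

Fixpoint exec (p : list instr) (n : nat) (s : state) : option state :=
  match n with
  | O => Some s
  | S n' => match step p s with Some s' => exec p n' s' | None => None end
  end.

Definition init_state (x0 x1 y0 y1 : R) : state :=
  mkState 0%nat
    (fun i => match i with 0%nat => x0 | 1%nat => x1 | 2%nat => y0 | 3%nat => y1 | _ => 0 end)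
    [].

Definition halts_with (p : list instr) (s : state) (n : nat) (L : list (R * R)) : Prop :=
  exists s', exec p n s = Some s' /\ step p s' = None /\ out s' = L.

(* Main.v *)
Require Import Defs.
From Stdlib Require Import Reals List ZArith Lra Lia Psatz FinFun.
Import ListNotations.
Open Scope R_scope.

Definition NOP := IBin OAdd 41 41 13.
Definition prog : list instr := [
 IConst 4 2; IConst 5 1; IBin ODiv 6 5 4; IBin OPow 7 4 6; IConst 8 3;
 IBin OMul 9 4 7; IBin OAdd 9 8 9; ILn 10 9; IBin OSub 11 1 0; IBin OSub 12 3 2;
 (*10*) IConst 13 0; IJle 11 13 17; ILn 14 11; IBin ODiv 14 14 10; IFloor 14 14;
 (*15*) IBin OSub 15 13 14; IJle 13 13 22; ILn 14 12; IBin ODiv 14 14 10; IFloor 15 14;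
 (*20*) NOP; NOP; IBin OPow 16 9 15; IBin OSub 18 13 15; IBin OPow 17 9 18;
 (*25*) IBin OMul 19 16 0; IBin OMul 20 16 1; IBin OMul 21 17 2; IBin OMul 22 17 3; IBin OMul 25 4 7;
 (*30*) IBin OAdd 23 17 16; IBin ODiv 23 23 4; IBin OSub 24 17 16; IBin ODiv 24 24 25; IBin OSub 26 19 22;
 (*35*) IBin ODiv 26 26 25; IBin OSub 26 13 26; IFloor 26 26; IBin OSub 26 13 26; IBin OSub 27 20 21;
 (*40*) IBin ODiv 27 27 25; IFloor 27 27; IJle 26 27 44; IHalt; IBin OMul 28 26 7;
 (*45*) IBin OSub 31 19 28; IBin OAdd 32 21 28; IBin OSub 33 20 28; IBin OAdd 34 22 28; IJle 31 32 52;
 (*50*) IBin OAdd 35 31 13; IJle 13 13 54; IBin OAdd 35 32 13; NOP; IJle 33 34 57;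
 (*55*) IBin OAdd 36 34 13; IJle 13 13 59; IBin OAdd 36 33 13; NOP; IBin OSub 29 13 35;
 (*60*) IFloor 29 29; IBin OSub 29 13 29; IFloor 30 36; IJle 29 30 66; IBin OAdd 26 26 5;
 (*65*) IJle 13 13 42; IBin OMul 37 23 29; IBin OMul 38 24 26; IBin OMul 38 4 38; IBin OAdd 37 37 38;
 (*70*) IBin OMul 39 24 29; IBin OMul 40 23 26; IBin OAdd 39 39 40; IOut 37 39; IBin OAdd 29 29 5;
 (*75*) IJle 13 13 63 ].

Lemma exec_plus p n m s : exec p (n + m) s =
  match exec p n s with Some s' => exec p m s' | None => None end.
Proof. revert s; induction n; intros s; simpl; auto. destruct (step p s); auto. Qed.

Ltac run0 := lazy [exec step nth_error prog NOP pc regs out upd Nat.eqb eval_binop].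
Ltac run := run0; repeat (match goal with |- context[Rle_dec ?x ?x] =>
   let Hf := fresh in destruct (Rle_dec x x) as [_|Hf]; [|exfalso; apply Hf; apply Rle_refl] end; run0).

Definition Binv (s X0 X1 Y0 Y1 p q : R) (bmax : Z) (r : nat -> R) : Prop :=
  r 4%nat = 2 /\ r 5%nat = 1 /\ r 7%nat = s /\ r 13%nat = 0 /\ r 19%nat = X0 /\ r 20%nat = X1 /\
  r 21%nat = Y0 /\ r 22%nat = Y1 /\ r 23%nat = p /\ r 24%nat = q /\ r 27%nat = IZR bmax.

Definition g (p q : R) (ab : Z * Z) : R * R :=
  (p * IZR (fst ab) + 2 * (q * IZR (snd ab)), q * IZR (fst ab) + p * IZR (snd ab)).

Fixpoint Zseq (a : Z) (k : nat) : list Z :=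
  match k with O => [] | S k => a :: Zseq (a + 1)%Z k end.
Definition pairsA (b a : Z) (k : nat) : list (Z * Z) := map (fun x => (x, b)) (Zseq a k).

Lemma astep : forall (a amx b : Z) r o s X0 X1 Y0 Y1 p q bmax,
  Binv s X0 X1 Y0 Y1 p q bmax r -> r 26%nat = IZR b -> r 29%nat = IZR a -> r 30%nat = IZR amx ->
  (a <= amx)%Z ->
  exists r', exec prog 11 (mkState 63 r o) = Some (mkState 63 r' (o ++ [g p q (a, b)]))
   /\ Binv s X0 X1 Y0 Y1 p q bmax r' /\ r' 26%nat = IZR b /\ r' 29%nat = IZR (a+1) /\ r' 30%nat = IZR amx.
Proof.
  intros a amx b r o s X0 X1 Y0 Y1 p q bmax HB Hb Ha Hamx Hk.
  pose proof HB as (H4&H5&H7&H13&H19&H20&H21&H22&H23&H24&H27).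
  run. destruct (Rle_dec (r 29%nat) (r 30%nat)) as [Hle|Hle].
  2:{ exfalso. apply Hle. rewrite Ha, Hamx. apply IZR_le. lia. }
  run. eexists. split.
  - unfold g; simpl. rewrite H23, H24, Ha, Hb, H4. reflexivity.
  - split. unfold Binv; repeat match goal with |- _ /\ _ => split end; run; auto.
    run. refine (conj _ (conj _ _)); auto. rewrite ?Ha, ?H5, plus_IZR. auto.
Qed.

Lemma aloop : forall k (a amx b : Z) r o s X0 X1 Y0 Y1 p q bmax,
  Binv s X0 X1 Y0 Y1 p q bmax r -> r 26%nat = IZR b -> r 29%nat = IZR a -> r 30%nat = IZR amx ->
  k = Z.to_nat (amx - a + 1) ->
  exists r', exec prog (11 * k + 3) (mkState 63 r o) = Some (mkState 42 r' (o ++ map (g p q) (pairsA b a k)))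
   /\ Binv s X0 X1 Y0 Y1 p q bmax r' /\ r' 26%nat = IZR (b + 1).
Proof.
  induction k; intros a amx b r o s X0 X1 Y0 Y1 p q bmax HB Hb Ha Hamx Hk;
  pose proof HB as (H4&H5&H7&H13&H19&H20&H21&H22&H23&H24&H27).
  - change (11 * 0 + 3)%nat with 3%nat. run. destruct (Rle_dec (r 29%nat) (r 30%nat)) as [Hle|Hle].
    + exfalso. rewrite Ha, Hamx in Hle. apply le_IZR in Hle. lia.
    + run. replace (o ++ map (g p q) (pairsA b a 0)) with o by (unfold pairsA; simpl; rewrite app_nil_r; auto).
      eexists. split. reflexivity.
      split. unfold Binv; repeat match goal with |- _ /\ _ => split end; run; auto.
      run. rewrite Hb, H5, plus_IZR; reflexivity.
  - destruct (astep a amx b r o s X0 X1 Y0 Y1 p q bmax HB Hb Ha Hamx ltac:(lia)) as (r1 & E1 & HB1 & Hb1 & Ha1 & Hm1).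
    destruct (IHk (a+1)%Z amx b r1 (o ++ [g p q (a, b)]) s X0 X1 Y0 Y1 p q bmax HB1 Hb1 Ha1 Hm1 ltac:(lia)) as (r' & E & HB' & Hb').
    exists r'. split; [|split; auto].
    replace (11 * S k + 3)%nat with (11 + (11 * k + 3))%nat by lia.
    rewrite exec_plus, E1, E. f_equal. f_equal. unfold pairsA. simpl. rewrite <- app_assoc. reflexivity.
Qed.

Definition lo (s X0 Y0 : R) (b : Z) := Rmax (X0 - IZR b * s) (Y0 + IZR b * s).
Definition hi (s X1 Y1 : R) (b : Z) := Rmin (X1 - IZR b * s) (Y1 + IZR b * s).
Definition amin s X0 Y0 b := (- Int_part (0 - lo s X0 Y0 b))%Z.
Definition amax s X1 Y1 b := Int_part (hi s X1 Y1 b).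

Fixpoint pairsB s X0 X1 Y0 Y1 (b : Z) (kb : nat) : list (Z * Z) :=
  match kb with O => []
  | S kb => pairsA b (amin s X0 Y0 b) (Z.to_nat (amax s X1 Y1 b - amin s X0 Y0 b + 1))
            ++ pairsB s X0 X1 Y0 Y1 (b + 1)%Z kb end.

Lemma bpro : forall r o b s X0 X1 Y0 Y1 p q bmax,
  Binv s X0 X1 Y0 Y1 p q bmax r -> r 26%nat = IZR b -> (b <= bmax)%Z ->
  exists r', exec prog 16 (mkState 42 r o) = Some (mkState 63 r' o) /\
   Binv s X0 X1 Y0 Y1 p q bmax r' /\ r' 26%nat = IZR b /\
   r' 29%nat = IZR (amin s X0 Y0 b) /\ r' 30%nat = IZR (amax s X1 Y1 b).
Proof.
  intros r o b s X0 X1 Y0 Y1 p q bmax HB Hb Hbm.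
  pose proof HB as (H4&H5&H7&H13&H19&H20&H21&H22&H23&H24&H27).
  run. destruct (Rle_dec (r 26%nat) (r 27%nat)) as [Hle|Hle].
  2:{ exfalso. apply Hle. rewrite Hb, H27. apply IZR_le. lia. }
  run. rewrite ?H19, ?H20, ?H21, ?H22, ?Hb, ?H7, ?H13.
  destruct (Rle_dec (X0 - IZR b * s) (Y0 + IZR b * s)) as [L1|L1]; run;
  destruct (Rle_dec (X1 - IZR b * s) (Y1 + IZR b * s)) as [L2|L2]; run;
  (eexists; split; [reflexivity|]);
  (split; [unfold Binv; repeat match goal with |- _ /\ _ => split end; run; auto|]);
  run; (split; [auto|]); unfold amin, amax, lo, hi, Rmax, Rmin;
  (destruct (Rle_dec (X0 - IZR b * s) (Y0 + IZR b * s)); [|]; try contradiction);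
  (destruct (Rle_dec (X1 - IZR b * s) (Y1 + IZR b * s)); [|]; try contradiction);
  rewrite ?H13, ?Rplus_0_r; split; try reflexivity; rewrite opp_IZR; ring.
Qed.

Lemma bloop : forall kb b r o s X0 X1 Y0 Y1 p q bmax,
  Binv s X0 X1 Y0 Y1 p q bmax r -> r 26%nat = IZR b -> kb = Z.to_nat (bmax - b + 1) ->
  exists n s', exec prog n (mkState 42 r o) = Some s' /\ step prog s' = None /\
    out s' = o ++ map (g p q) (pairsB s X0 X1 Y0 Y1 b kb) /\
    (n <= 30 * kb + 11 * length (pairsB s X0 X1 Y0 Y1 b kb) + 1)%nat.
Proof.
  induction kb; intros b r o s X0 X1 Y0 Y1 p q bmax HB Hb Hk;
  pose proof HB as (H4&H5&H7&H13&H19&H20&H21&H22&H23&H24&H27).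
  - exists 1%nat. run. destruct (Rle_dec (r 26%nat) (r 27%nat)) as [Hle|Hle].
    + exfalso. rewrite Hb, H27 in Hle. apply le_IZR in Hle. lia.
    + run. eexists. split. reflexivity. split. reflexivity. simpl. rewrite app_nil_r. split; auto.
  - destruct (bpro r o b s X0 X1 Y0 Y1 p q bmax HB Hb ltac:(lia)) as (r1 & E1 & HB1 & Hb1 & Ha1 & Hm1).
    destruct (aloop _ _ _ b r1 o s X0 X1 Y0 Y1 p q bmax HB1 Hb1 Ha1 Hm1 eq_refl) as (r2 & E2 & HB2 & Hb2).
    destruct (IHkb (b+1)%Z r2 (o ++ map (g p q) (pairsA b (amin s X0 Y0 b) (Z.to_nat (amax s X1 Y1 b - amin s X0 Y0 b + 1))))
       s X0 X1 Y0 Y1 p q bmax HB2 Hb2 ltac:(lia)) as (n & s' & E3 & St & Out & Hn).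
    exists (16 + (11 * Z.to_nat (amax s X1 Y1 b - amin s X0 Y0 b + 1) + 3) + n)%nat, s'.
    rewrite !exec_plus, E1, E2, E3. split; auto. split; auto. split.
    + rewrite Out. simpl. rewrite map_app, app_assoc. reflexivity.
    + simpl. rewrite length_app. unfold pairsA. rewrite length_map.
      assert (forall a k, length (Zseq a k) = k) as LZ by (intros a k; revert a; induction k; simpl; auto).
      rewrite LZ. lia.
Qed.

Definition sq := Rpower 2 (1 / 2).
Definition Lam := 3 + 2 * sq.
Definition mR x0 x1 y0 y1 := if Rle_dec (x1 - x0) 0 then IZR (Int_part (ln (y1 - y0) / ln Lam))
   else 0 - IZR (Int_part (ln (x1 - x0) / ln Lam)).
Definition nu x0 x1 y0 y1 := Rpower Lam (mR x0 x1 y0 y1).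
Definition nu' x0 x1 y0 y1 := Rpower Lam (0 - mR x0 x1 y0 y1).
Definition pp x0 x1 y0 y1 := (nu' x0 x1 y0 y1 + nu x0 x1 y0 y1) / 2.
Definition qq x0 x1 y0 y1 := (nu' x0 x1 y0 y1 - nu x0 x1 y0 y1) / (2 * sq).
Definition bminZ x0 x1 y0 y1 :=
  (- Int_part (0 - (nu x0 x1 y0 y1 * x0 - nu' x0 x1 y0 y1 * y1) / (2 * sq)))%Z.
Definition bmaxZ x0 x1 y0 y1 :=
  Int_part ((nu x0 x1 y0 y1 * x1 - nu' x0 x1 y0 y1 * y0) / (2 * sq)).

Lemma initseg : forall x0 x1 y0 y1, exists r,
  exec prog 37 (init_state x0 x1 y0 y1) = Some (mkState 42 r []) /\
  Binv sq (nu x0 x1 y0 y1 * x0) (nu x0 x1 y0 y1 * x1) (nu' x0 x1 y0 y1 * y0) (nu' x0 x1 y0 y1 * y1)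
     (pp x0 x1 y0 y1) (qq x0 x1 y0 y1) (bmaxZ x0 x1 y0 y1) r /\
  r 26%nat = IZR (bminZ x0 x1 y0 y1).
Proof.
  intros x0 x1 y0 y1. unfold init_state. run.
  unfold bminZ, bmaxZ, pp, qq, nu, nu', mR, Lam, sq.
  destruct (Rle_dec (x1 - x0) 0); run;
  (eexists; split; [reflexivity|]);
  (split; [unfold Binv; repeat match goal with |- _ /\ _ => split end; run; try reflexivity|]).
  all: run; rewrite opp_IZR; ring.
Qed.

Lemma sq_eq : sq = sqrt 2.
Proof. unfold sq. replace (1/2) with (/2) by field. apply Rpower_sqrt. lra. Qed.

Lemma sq_facts : sq * sq = 2 /\ 4/3 < sq < 3/2.
Proof.
  rewrite sq_eq. assert (H := sqrt_sqrt 2 ltac:(lra)). assert (0 <= sqrt 2) by apply sqrt_pos.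
  split; auto. split; nra.
Qed.

Lemma Lam_facts : 1 < Lam < 6 /\ 0 < ln Lam.
Proof.
  destruct sq_facts as [H1 H2]. unfold Lam. split. lra. rewrite <- ln_1. apply ln_increasing; lra.
Qed.

Lemma mulS : forall a b c d, (a + b*sq)*(c+d*sq) = (a*c + 2*(b*d)) + (a*d+b*c)*sq.
Proof. intros. destruct sq_facts as [S _]. transitivity (a*c + b*d*(sq*sq) + (a*d+b*c)*sq). ring. rewrite S; ring. Qed.
Lemma mulS' : forall a b c d, (a - b*sq)*(c-d*sq) = (a*c + 2*(b*d)) - (a*d+b*c)*sq.
Proof. intros. destruct sq_facts as [S _]. transitivity (a*c + b*d*(sq*sq) - (a*d+b*c)*sq). ring. rewrite S; ring. Qed.

Lemma pow_struct : forall n : nat, exists P Q : Z,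
  Lam ^ n = IZR P + IZR Q * sq /\ (3 - 2 * sq) ^ n = IZR P - IZR Q * sq.
Proof.
  induction n. exists 1%Z, 0%Z. simpl. split; ring.
  destruct IHn as (P & Q & H1 & H2). exists (3*P + 4*Q)%Z, (2*P+3*Q)%Z.
  destruct sq_facts as [S _]. cbn [pow]. rewrite H1, H2. unfold Lam.
  rewrite !plus_IZR, !mult_IZR. split. rewrite mulS; ring. replace (3 - 2*sq) with (3 - 2 * sq) by ring. rewrite mulS'; ring.
Qed.

Lemma Lam_inv : Lam * (3 - 2 * sq) = 1.
Proof. destruct sq_facts as [S _]. unfold Lam. nra. Qed.

Lemma rpow_struct : forall m : Z, exists P Q : Z,
  Rpower Lam (IZR m) = IZR P + IZR Q * sq /\ Rpower Lam (0 - IZR m) = IZR P - IZR Q * sq.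
Proof.
  intros m. destruct Lam_facts as [[L1 L2] _].
  assert (Hp : forall n, Rpower Lam (INR n) = Lam ^ n) by (intros; apply Rpower_pow; lra).
  assert (Hn : forall n, Rpower Lam (- INR n) = (3 - 2 * sq) ^ n).
  { intros n. rewrite Rpower_Ropp, Hp.
    assert (E: Lam^n * (3-2*sq)^n = 1) by (rewrite <- Rpow_mult_distr, Lam_inv; apply pow1).
    assert (Lam^n <> 0) by (apply pow_nonzero; lra).
    apply (Rmult_eq_reg_l (Lam^n)); auto. rewrite Rinv_r; auto. }
  destruct (Z_le_gt_dec 0 m).
  - destruct (pow_struct (Z.to_nat m)) as (P & Q & H1 & H2). exists P, Q.
    rewrite <- (Z2Nat.id m) by lia. rewrite <- INR_IZR_INZ. rewrite Hp, Rminus_0_l, Hn. auto.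
  - destruct (pow_struct (Z.to_nat (- m))) as (P & Q & H1 & H2). exists P, (- Q)%Z.
    replace (IZR m) with (- INR (Z.to_nat (- m))).
    2:{ rewrite INR_IZR_INZ, Z2Nat.id by lia. rewrite opp_IZR. ring. }
    rewrite Hn, Rminus_0_l, Ropp_involutive, Hp, opp_IZR. split; [rewrite H2|rewrite H1]; ring.
Qed.

Lemma floor_le : forall t z, (z <= Int_part t)%Z <-> IZR z <= t.
Proof.
  intros t z. destruct (base_Int_part t) as [H1 H2]. split; intros H.
  - apply IZR_le in H. lra.
  - assert (IZR z < IZR (Int_part t + 1)) by (rewrite plus_IZR; lra).
    apply lt_IZR in H0. lia.
Qed.
Lemma floor_gt : forall t, t < IZR (Int_part t) + 1.
Proof. intros t. destruct (base_Int_part t). lra. Qed.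
Lemma floor_lb : forall t, IZR (Int_part t) <= t.
Proof. intros t. destruct (base_Int_part t). lra. Qed.
Lemma ceil_le : forall t z, (- Int_part (0 - t) <= z)%Z <-> t <= IZR z.
Proof.
  intros t z. assert (E := floor_le (0 - t) (- z)). rewrite opp_IZR in E.
  split; intros H. assert (- z <= Int_part (0 - t))%Z by lia. apply E in H0. lra.
  assert (- IZR z <= 0 - t) by lra. apply E in H0. lia.
Qed.
Lemma ceil_lt : forall t, IZR (- Int_part (0 - t)) < t + 1.
Proof. intros t. destruct (base_Int_part (0 - t)). rewrite opp_IZR. lra. Qed.
Lemma ceil_ge : forall t, t <= IZR (- Int_part (0 - t)).
Proof. intros t. apply ceil_le. lia. Qed.

Lemma divc : forall A c z, 0 < c -> (A / c <= z <-> A <= z * c) /\ (z <= A / c <-> z * c <= A).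
Proof.
  intros A c z Hc. assert (E : A = A / c * c) by (field; lra).
  split; split; intros H.
  - rewrite E. apply Rmult_le_compat_r; lra.
  - apply Rmult_le_reg_r with c; auto. rewrite <- E. auto.
  - rewrite E. apply Rmult_le_compat_r; lra.
  - apply Rmult_le_reg_r with c; auto. rewrite <- E. auto.
Qed.

Lemma In_Zseq : forall k a x, In x (Zseq a k) <-> (a <= x < a + Z.of_nat k)%Z.
Proof. induction k; intros a x; simpl. lia. rewrite IHk. lia. Qed.
Lemma NoDup_Zseq : forall k a, NoDup (Zseq a k).
Proof. induction k; intros a; simpl; constructor; auto. rewrite In_Zseq. lia. Qed.
Lemma len_Zseq : forall k a, length (Zseq a k) = k.
Proof. induction k; intros a; simpl; auto. Qed.

Lemma In_pairsA : forall b a k x y, In (x, y) (pairsA b a k) <-> y = b /\ (a <= x < a + Z.of_nat k)%Z.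
Proof.
  intros. unfold pairsA. rewrite in_map_iff. split.
  - intros (z & E & Hz). inversion E; subst. rewrite In_Zseq in Hz. auto.
  - intros [-> H]. exists x. split; auto. apply In_Zseq; auto.
Qed.

Lemma In_pairsB : forall s X0 X1 Y0 Y1 kb b0 x y, In (x, y) (pairsB s X0 X1 Y0 Y1 b0 kb) <->
  (b0 <= y < b0 + Z.of_nat kb)%Z /\ (amin s X0 Y0 y <= x <= amax s X1 Y1 y)%Z.
Proof.
  induction kb; intros b0 x y; simpl. lia.
  rewrite in_app_iff, In_pairsA, IHkb. split.
  - intros [[-> H]|[H1 H2]]; split; try lia.
  - intros [H1 H2]. destruct (Z.eq_dec y b0). left; subst; split; auto; lia. right; split; lia.
Qed.

Lemma NoDup_pairsB : forall s X0 X1 Y0 Y1 kb b0, NoDup (pairsB s X0 X1 Y0 Y1 b0 kb).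
Proof.
  induction kb; intros b0; simpl. constructor.
  apply NoDup_app; auto.
  - unfold pairsA. apply Injective_map_NoDup. intros u v E; inversion E; auto. apply NoDup_Zseq.
  - intros [x y] H1 H2. apply In_pairsA in H1. apply In_pairsB in H2. lia.
Qed.

Lemma len_pairsB : forall s X0 X1 Y0 Y1 kb b0, length (pairsB s X0 X1 Y0 Y1 b0 (S kb)) =
  (Z.to_nat (amax s X1 Y1 b0 - amin s X0 Y0 b0 + 1) + length (pairsB s X0 X1 Y0 Y1 (b0 + 1) kb))%nat.
Proof. intros. simpl. rewrite length_app. unfold pairsA. rewrite length_map, len_Zseq. auto. Qed.

Lemma cnt1 : forall s X0 X1 Y0 Y1 kb b0,
  (forall b, (b0 <= b < b0 + Z.of_nat kb - 1)%Z -> (amin s X0 Y0 b <= amax s X1 Y1 b)%Z) ->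
  (kb <= length (pairsB s X0 X1 Y0 Y1 b0 kb) + 1)%nat.
Proof.
  induction kb; intros b0 H. lia.
  rewrite len_pairsB. destruct kb. lia.
  assert (H1 := H b0 ltac:(lia)).
  assert (IH := IHkb (b0 + 1)%Z ltac:(intros b Hb; apply H; lia)). lia.
Qed.

Lemma cnt2 : forall s X0 X1 Y0 Y1 kb b0,
  (forall b, (b0 < b < b0 + Z.of_nat kb - 1)%Z -> (amin s X0 Y0 b <= amax s X1 Y1 b)%Z) ->
  (kb <= length (pairsB s X0 X1 Y0 Y1 b0 kb) + 2)%nat.
Proof.
  intros s X0 X1 Y0 Y1 kb b0 H. destruct kb. lia.
  rewrite len_pairsB.
  assert (IH := cnt1 s X0 X1 Y0 Y1 kb (b0 + 1)%Z ltac:(intros b Hb; apply H; lia)). lia.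
Qed.

Lemma lohi : forall s X0 X1 Y0 Y1 a b,
  (amin s X0 Y0 b <= a <= amax s X1 Y1 b)%Z <->
  (X0 <= IZR a + IZR b * s <= X1 /\ Y0 <= IZR a - IZR b * s <= Y1).
Proof.
  intros. unfold amin, amax.
  assert (E1 := ceil_le (lo s X0 Y0 b) a). assert (E2 := floor_le (hi s X1 Y1 b) a).
  unfold lo, hi, Rmax, Rmin in *.
  destruct (Rle_dec (X0 - IZR b * s) (Y0 + IZR b * s));
  destruct (Rle_dec (X1 - IZR b * s) (Y1 + IZR b * s)); split; intros H;
  try (destruct H as [Ha Hb]; apply E1 in Ha; apply E2 in Hb; lra);
  (split; [apply E1|apply E2]; lra).
Qed.

Definition bminX s X0 Y1 := (- Int_part (0 - (X0 - Y1) / (2 * s)))%Z.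
Definition bmaxX s X1 Y0 := Int_part ((X1 - Y0) / (2 * s)).

Lemma bmin_prop : forall s X0 Y1, 0 < s -> X0 - Y1 <= IZR (bminX s X0 Y1) * (2 * s).
Proof. intros. apply (divc (X0 - Y1) (2*s)). lra. apply ceil_ge. Qed.
Lemma bmax_prop : forall s X1 Y0, 0 < s -> IZR (bmaxX s X1 Y0) * (2 * s) <= X1 - Y0.
Proof. intros. apply (divc (X1 - Y0) (2*s)). lra. apply floor_lb. Qed.

Lemma pairs_iff : forall s X0 X1 Y0 Y1 a b, 0 < s ->
  In (a, b) (pairsB s X0 X1 Y0 Y1 (bminX s X0 Y1) (Z.to_nat (bmaxX s X1 Y0 - bminX s X0 Y1 + 1))) <->
  (X0 <= IZR a + IZR b * s <= X1 /\ Y0 <= IZR a - IZR b * s <= Y1).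
Proof.
  intros s X0 X1 Y0 Y1 a b Hs. rewrite In_pairsB, lohi. split. tauto.
  intros H. split; auto.
  assert (bminX s X0 Y1 <= b)%Z.
  { unfold bminX. apply ceil_le. apply (divc (X0 - Y1) (2*s)). lra. lra. }
  assert (b <= bmaxX s X1 Y0)%Z.
  { unfold bmaxX. apply floor_le. apply (divc (X1 - Y0) (2*s)). lra. lra. }
  lia.
Qed.

Lemma myC1 : forall s X0 X1 Y0 Y1, 1/2 < s -> 1 <= X1 - X0 -> 1 <= Y1 - Y0 ->
  forall b, (bminX s X0 Y1 < b < bmaxX s X1 Y0)%Z -> (amin s X0 Y0 b <= amax s X1 Y1 b)%Z.
Proof.
  intros s X0 X1 Y0 Y1 Hs H1 H2 b Hb.
  assert (P1 := bmin_prop s X0 Y1 ltac:(lra)). assert (P2 := bmax_prop s X1 Y0 ltac:(lra)).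
  assert (IZR (bminX s X0 Y1) + 1 <= IZR b) by (rewrite <- plus_IZR; apply IZR_le; lia).
  assert (IZR b + 1 <= IZR (bmaxX s X1 Y0)) by (rewrite <- plus_IZR; apply IZR_le; lia).
  assert (A1 : X0 - Y1 + 2 * s <= 2 * (IZR b * s)) by nra.
  assert (A2 : 2 * (IZR b * s) + 2 * s <= X1 - Y0) by nra.
  assert (Hhl : lo s X0 Y0 b + 1 <= hi s X1 Y1 b).
  { unfold lo, hi, Rmax, Rmin.
    destruct (Rle_dec (X0 - IZR b * s) (Y0 + IZR b * s));
    destruct (Rle_dec (X1 - IZR b * s) (Y1 + IZR b * s)); lra. }
  unfold amin, amax. apply floor_le. assert (T := ceil_lt (lo s X0 Y0 b)). lra.
Qed.

Lemma myC2 : forall s X0 X1 Y0 Y1, 4/3 < s -> (X1 - X0) + (Y1 - Y0) < 8 ->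
  (bmaxX s X1 Y0 - bminX s X0 Y1 <= 2)%Z.
Proof.
  intros s X0 X1 Y0 Y1 Hs H.
  assert (P1 := bmin_prop s X0 Y1 ltac:(lra)). assert (P2 := bmax_prop s X1 Y0 ltac:(lra)).
  destruct (Z_le_gt_dec (bmaxX s X1 Y0 - bminX s X0 Y1) 2); auto.
  assert (3 <= IZR (bmaxX s X1 Y0) - IZR (bminX s X0 Y1)) by (rewrite <- minus_IZR; apply IZR_le; lia).
  nra.
Qed.

Lemma scaling : forall D, 0 < D ->
  1 <= Rpower Lam (0 - IZR (Int_part (ln D / ln Lam))) * D < Lam.
Proof.
  intros D HD. destruct Lam_facts as [[L1 L2] L3].
  set (t := ln D / ln Lam). set (f := Int_part t).
  assert (F1 := floor_lb t). assert (F2 := floor_gt t). fold f in F1, F2.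
  assert (Et : ln D = t * ln Lam) by (unfold t; field; lra).
  set (e := (0 - IZR f) * ln Lam + ln D).
  replace (Rpower Lam (0 - IZR f) * D) with (exp e) by (unfold e, Rpower; rewrite exp_plus, exp_ln; auto).
  assert (He : e = (t - IZR f) * ln Lam) by (unfold e; rewrite Et; ring).
  assert (0 <= e) by (rewrite He; apply Rmult_le_pos; lra).
  assert (e < ln Lam) by (rewrite He; nra).
  split.
  - rewrite <- exp_0. destruct (Rle_lt_or_eq_dec 0 e H). left; apply exp_increasing; auto. right; f_equal; auto.
  - rewrite <- (exp_ln Lam) by lra. apply exp_increasing; auto.
Qed.

Lemma scale_le : forall c c' z w, 0 < c -> c * c' = 1 ->
  (c * z <= w <-> z <= w * c') /\ (w <= c * z <-> w * c' <= z).
Proof.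
  intros c c' z w Hc E. assert (Hc' : 0 < c') by nra.
  assert (Z1 : c * z * c' = z) by (transitivity (z * (c * c')); [ring|rewrite E; ring]).
  assert (Z2 : w * c' * c = w) by (transitivity (w * (c * c')); [ring|rewrite E; ring]).
  split; split; intros H.
  - rewrite <- Z1. apply Rmult_le_compat_r; lra.
  - rewrite <- Z2. rewrite (Rmult_comm c z). apply Rmult_le_compat_r; lra.
  - rewrite <- Z1. apply Rmult_le_compat_r; lra.
  - rewrite <- Z2. rewrite (Rmult_comm c z). apply Rmult_le_compat_r; lra.
Qed.

Lemma LU : forall a b P Q, (a + b*sq)*(P - Q*sq) = a*P - 2*(Q*b) + (-(Q*a) + P*b)*sq.
Proof. intros. destruct sq_facts as [S _].
  transitivity (a*P - 2*(Q*b) + (-(Q*a) + P*b)*sq - Q*b*(sq*sq - 2)). ring. rewrite S; ring. Qed.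
Lemma LC : forall a b P Q, (a - b*sq)*(P + Q*sq) = a*P - 2*(Q*b) - (-(Q*a) + P*b)*sq.
Proof. intros. destruct sq_facts as [S _].
  transitivity (a*P - 2*(Q*b) - (-(Q*a) + P*b)*sq - Q*b*(sq*sq - 2)). ring. rewrite S; ring. Qed.

Theorem proposition5p27 :
  exists (p : list instr) (C : nat),
    forall x0 x1 y0 y1 : R, x0 <= x1 -> y0 <= y1 ->
      exists (n : nat) (L : list (R * R)),
        halts_with p (init_state x0 x1 y0 y1) n L /\
        enumerates_grid1d x0 x1 y0 y1 L /\
        (n <= C * (length L + 1))%nat.
Proof.
  exists prog, 128%nat. intros x0 x1 y0 y1 Hx Hy.
  destruct sq_facts as [S [S1 S2]]. destruct Lam_facts as [[L1 L2] L3].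
  destruct (initseg x0 x1 y0 y1) as (r & E0 & HB & Hb).
  set (kb := Z.to_nat (bmaxZ x0 x1 y0 y1 - bminZ x0 x1 y0 y1 + 1)).
  destruct (bloop kb (bminZ x0 x1 y0 y1) r [] _ _ _ _ _ _ _ _ HB Hb eq_refl) as (n & s' & E1 & St & Out & Hn).
  set (nv := nu x0 x1 y0 y1) in *. set (nv' := nu' x0 x1 y0 y1) in *.
  set (X0 := nv * x0) in *. set (X1 := nv * x1) in *. set (Y0 := nv' * y0) in *. set (Y1 := nv' * y1) in *.
  assert (Ebmin : bminZ x0 x1 y0 y1 = bminX sq X0 Y1) by reflexivity.
  assert (Ebmax : bmaxZ x0 x1 y0 y1 = bmaxX sq X1 Y0) by reflexivity.
  set (pl := pairsB sq X0 X1 Y0 Y1 (bminZ x0 x1 y0 y1) kb) in *.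
  exists (37 + n)%nat, (map (g (pp x0 x1 y0 y1) (qq x0 x1 y0 y1)) pl).
  assert (Hm : exists m, mR x0 x1 y0 y1 = IZR m).
  { unfold mR. destruct (Rle_dec (x1 - x0) 0). eexists; reflexivity.
    exists (- Int_part (ln (x1 - x0) / ln Lam))%Z. rewrite opp_IZR. ring. }
  destruct Hm as [m Hm].
  destruct (rpow_struct m) as (P & Q & HP1 & HP2).
  assert (Hnu : nv = IZR P + IZR Q * sq) by (unfold nv, nu; rewrite Hm; auto).
  assert (Hnu' : nv' = IZR P - IZR Q * sq) by (unfold nv', nu'; rewrite Hm; auto).
  assert (Hprod : nv * nv' = 1).
  { unfold nv, nv', nu, nu'. rewrite <- Rpower_plus.
    replace (mR x0 x1 y0 y1 + (0 - mR x0 x1 y0 y1)) with 0 by ring. apply Rpower_O; lra. }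
  assert (Hnvp : 0 < nv) by (unfold nv, nu, Rpower; apply exp_pos).
  assert (Hnvp' : 0 < nv') by (unfold nv', nu', Rpower; apply exp_pos).
  assert (HPQ : (P * P - 2 * Q * Q = 1)%Z).
  { apply eq_IZR. rewrite minus_IZR, !mult_IZR. rewrite <- Hprod, Hnu, Hnu'.
    transitivity ((IZR P + IZR Q * sq) * (IZR P - IZR Q * sq) + IZR Q * IZR Q * (sq * sq - 2)).
    ring. rewrite S; ring. }
  assert (Hpp : pp x0 x1 y0 y1 = IZR P) by (unfold pp; fold nv nv'; rewrite Hnu, Hnu'; field).
  assert (Hqq : qq x0 x1 y0 y1 = IZR (- Q)) by (unfold qq; fold nv nv'; rewrite Hnu, Hnu', opp_IZR; field; lra).
  assert (Hg : forall a b, g (pp x0 x1 y0 y1) (qq x0 x1 y0 y1) (a, b) =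
     (IZR (P * a - 2 * (Q * b)), IZR (- (Q * a) + P * b))).
  { intros a b. unfold g; cbn [fst snd]. rewrite Hpp, Hqq.
    f_equal; rewrite ?minus_IZR, ?plus_IZR, ?opp_IZR, ?mult_IZR, ?opp_IZR; ring. }
  assert (E2 : forall a b, (X0 <= IZR a + IZR b * sq <= X1 /\ Y0 <= IZR a - IZR b * sq <= Y1) <->
     grid1d_sol x0 x1 y0 y1 (P * a - 2 * (Q * b)) (- (Q * a) + P * b)).
  { intros a b. unfold grid1d_sol, zsqrt2, zsqrt2_conj. rewrite <- sq_eq.
    assert (U : IZR (P * a - 2 * (Q * b)) + IZR (- (Q * a) + P * b) * sq = (IZR a + IZR b * sq) * nv').
    { rewrite Hnu', LU, ?minus_IZR, ?plus_IZR, ?opp_IZR, ?mult_IZR. ring. }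
    assert (V : IZR (P * a - 2 * (Q * b)) - IZR (- (Q * a) + P * b) * sq = (IZR a - IZR b * sq) * nv).
    { rewrite Hnu, LC, ?minus_IZR, ?plus_IZR, ?opp_IZR, ?mult_IZR. ring. }
    rewrite U, V.
    assert (Hprod' : nv' * nv = 1) by lra.
    destruct (scale_le nv nv' x0 (IZR a + IZR b * sq) Hnvp Hprod) as [A1 _].
    destruct (scale_le nv nv' x1 (IZR a + IZR b * sq) Hnvp Hprod) as [_ A2].
    destruct (scale_le nv' nv y0 (IZR a - IZR b * sq) Hnvp' Hprod') as [A3 _].
    destruct (scale_le nv' nv y1 (IZR a - IZR b * sq) Hnvp' Hprod') as [_ A4].
    unfold X0, X1, Y0, Y1. tauto. }
  split; [|split].
  - exists s'. split. rewrite exec_plus, E0. exact E1. split; [exact St| rewrite Out; reflexivity].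
  - split; [|split].
    + apply Injective_map_NoDup. 2: apply NoDup_pairsB.
      intros [a1 b1] [a2 b2] E. rewrite !Hg in E. assert (Ea := f_equal fst E); assert (Eb := f_equal snd E); cbn [fst snd] in Ea, Eb.
      apply eq_IZR in Ea. apply eq_IZR in Eb.
      assert (Ia : forall a b, a = (P*(P*a - 2*(Q*b)) + 2*Q*(-(Q*a)+P*b))%Z)
        by (intros; transitivity ((P*P-2*Q*Q)*a)%Z; [rewrite HPQ; ring| ring]).
      assert (Ib : forall a b, b = (Q*(P*a - 2*(Q*b)) + P*(-(Q*a)+P*b))%Z)
        by (intros; transitivity ((P*P-2*Q*Q)*b)%Z; [rewrite HPQ; ring| ring]).
      f_equal; [rewrite (Ia a1 b1), (Ia a2 b2), Ea, Eb | rewrite (Ib a1 b1), (Ib a2 b2), Ea, Eb]; reflexivity.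
    + intros pt Hpt. apply in_map_iff in Hpt. destruct Hpt as ([a b] & <- & Hin).
      unfold pl in Hin. rewrite Ebmin in Hin. unfold kb in Hin. rewrite Ebmin, Ebmax in Hin.
      apply pairs_iff in Hin; [|lra]. apply E2 in Hin.
      eexists; eexists. split. apply Hg. exact Hin.
    + intros a b Hs.
      set (a' := (P * a + 2 * (Q * b))%Z). set (b' := (Q * a + P * b)%Z).
      assert (Ea : (P * a' - 2 * (Q * b') = a)%Z).
      { unfold a', b'. transitivity ((P*P - 2*Q*Q) * a)%Z. ring. rewrite HPQ; ring. }
      assert (Eb : (- (Q * a') + P * b' = b)%Z).
      { unfold a', b'. transitivity ((P*P - 2*Q*Q) * b)%Z. ring. rewrite HPQ; ring. }
      apply in_map_iff. exists (a', b'). split. rewrite Hg, Ea, Eb. reflexivity.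
      unfold pl, kb. rewrite Ebmin, Ebmax. apply pairs_iff. lra.
      apply E2. rewrite Ea, Eb. exact Hs.
  - rewrite length_map.
    assert (Hk : (kb <= length pl + 3)%nat).
    { assert (Hd : X1 - X0 = nv * (x1 - x0)) by (unfold X1, X0; ring).
      assert (Hd' : Y1 - Y0 = nv' * (y1 - y0)) by (unfold Y1, Y0; ring).
      assert (Hcase : (1 <= X1 - X0 /\ 1 <= Y1 - Y0) \/ (X1 - X0) + (Y1 - Y0) < 8).
      { assert (0 <= Y1 - Y0) by (rewrite Hd'; apply Rmult_le_pos; lra).
        unfold nv, nv', nu, nu', mR in Hd, Hd'.
        destruct (Rle_dec (x1 - x0) 0).
        - right. assert (x1 - x0 = 0) by lra. rewrite H0, Rmult_0_r in Hd.
          destruct (Rle_lt_or_eq_dec 0 (y1 - y0)) as [Hpos|Hz]. lra.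
          + assert (T := scaling (y1 - y0) Hpos). lra.
          + rewrite <- Hz, Rmult_0_r in Hd'. lra.
        - assert (T := scaling (x1 - x0) ltac:(lra)). rewrite <- Hd in T.
          destruct (Rle_dec 1 (Y1 - Y0)). left; lra. right; lra. }
      destruct Hcase as [[C1a C1b]|C2a].
      + unfold pl. apply Nat.le_trans with (length (pairsB sq X0 X1 Y0 Y1 (bminZ x0 x1 y0 y1) kb) + 2)%nat; [|lia].
        apply cnt2. intros b Hb'. rewrite Ebmin in Hb'. unfold kb in Hb'. rewrite Ebmin, Ebmax in Hb'.
        apply myC1; auto. lra. lia.
      + assert (C := myC2 sq X0 X1 Y0 Y1 ltac:(lra) C2a). unfold kb. rewrite Ebmin, Ebmax. lia. }
    lia.
Qed.
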